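(* For each $x_{k-1}$, $$-\ln\int_{\mathcal{U}}q(u_k\mid x_{k-1})\exp\Big(-D_{KL}\big(\bar p(\cdot\mid x_{k-1},u_k)\|q(\cdot\mid x_{k-1},u_k)\big)-\mathbb{E}_{\bar p(\cdot\mid x_{k-1},u_k)}[\bar c(X_k)]-c^{(u)}_k(u_k)\Big)du_k$$ $$<-\ln\int_{\mathcal{U}}q(u_k\mid x_{k-1})\exp\Big(-\eta_k(x_{k-1},u_k)-\tilde c(x_{k-1},u_k)-c^{(u)}_k(u_k)\Big)du_k,$$ where $\tilde c(x_{k-1},u_k)=\min_{\alpha\ge0}\tilde V_\alpha(x_{k-1},u_k)$ with $\tilde V_0=M(x_{k-1},u_k):=\limsup_{x_k\in\mathrm{supp}\,\bar p(\cdot\mid x_{k-1},u_k)}\ln\big(\bar p(x_k\mid x_{k-1},u_k)e^{\bar c(x_k)}/q(x_k\mid x_{k-1},u_k)\big)$ and, for $\alpha>0$, $\tilde V_\alpha(x_{k-1},u_k)=\alpha\ln\mathbb{E}_{\bar p(\cdot\mid x_{k-1},u_k)}\big[\big(\bar p(X_k\mid x_{k-1},u_k)e^{\bar c(X_k)}/q(X_k\mid x_{k-1},u_k)\big)^{1/\alpha}\big]+\alpha\eta_k(x_{k-1},u_k)$. (That is, an agent affected by ambiguity cannot achieve a lower cost than the optimal cost of an ambiguity-free agent.)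
   Context: State space $\mathcal{X}\subseteq\mathbb{K}^n$, action space $\mathcal{U}\subseteq\mathbb{K}^p$, $\mathbb{K}\in\{\mathbb{R},\mathbb{Z}\}$ (pdfs or pmfs); $D_{KL}(p\|q)=\int p\ln(p/q)$. $q(u_k\mid x_{k-1})$ is a reference policy; $\bar p(x_k\mid x_{k-1},u_k)$ a nominal model; $q(x_k\mid x_{k-1},u_k)$ a bounded generative model with $\mathrm{supp}\,\bar p\subseteq\mathrm{supp}\,q$; $\eta_k(x_{k-1},u_k)>0$ an ambiguity radius uniformly bounded by a finite constant; $\bar c:\mathcal{X}\to\mathbb{R}$ non-negative and bounded; $c^{(u)}_k:\mathcal{U}\to\mathbb{R}$ a non-negative, lower bounded action cost. *)

(* Defs.v *)
From HB Require Import structures.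
From mathcomp Require Import all_boot all_order all_algebra.
From mathcomp Require Import all_classical all_reals all_analysis measurable_realfun.
Set Implicit Arguments. Unset Strict Implicit. Unset Printing Implicit Defensive.
Import Order.TTheory GRing.Theory Num.Theory.
Local Open Scope classical_set_scope.
Local Open Scope ring_scope.

Section Defs.
Context {R : realType} {d : measure_display} {T : measurableType d}.
Variable mu : {measure set T -> \bar R}.

(* p is a probability density (pdf, or pmf when mu is counting) w.r.t. mu *)
Definition is_density (p : T -> R) : Prop :=
  [/\ (forall y, 0 <= p y), measurable_fun setT p & (\int[mu]_y (p y)%:E = 1)%E].

Definition supp (p : T -> R) : set T := [set y | 0 < p y].

(* Kullback-Leibler divergence D_KL(p || q) = int p ln (p/q)  (0 ln 0 = 0) *)
Definition KL (p q : T -> R) : \bar R := (\int[mu]_y (p y * ln (p y / q y))%:E)%E.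

Definition expect (p : T -> R) (g : T -> R) : \bar R := (\int[mu]_y (p y * g y)%:E)%E.

Definition ratio (p q c : T -> R) (y : T) : R := p y * expR (c y) / q y.

Definition Vtilde (p q c : T -> R) (eta : R) (alpha : R) : \bar R :=
  if alpha == 0 then ereal_sup [set (ln (ratio p q c y))%:E | y in supp p]
  else (alpha%:E * lne (expect p (fun y => ((ratio p q c y) `^ (alpha^-1))%R))
        + (alpha * eta)%:E)%E.

Definition is_min_Vtilde (p q c : T -> R) (eta : R) (x : R) : Prop :=
  (exists2 a, 0 <= a & Vtilde p q c eta a = x%:E) /\
  (forall a, 0 <= a -> (x%:E <= Vtilde p q c eta a)%E).
End Defs.

(* Main.v *)
Require Import Defs.
From HB Require Import structures.
From mathcomp Require Import all_boot all_order all_algebra.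
From mathcomp Require Import all_classical all_reals all_analysis measurable_realfun.
From mathcomp Require Import lra.
Import Order.TTheory GRing.Theory Num.Theory.
Local Open Scope classical_set_scope.
Local Open Scope ring_scope.

Section Helpers.
Set Implicit Arguments.
Context {R : realType} {d : measure_display} {T : measurableType d}.
Variable mu : {measure set T -> \bar R}.

Lemma ln_le_sub1 (x : R) : 0 < x -> ln x <= x - 1.
Proof.
move=> x0; have := expR_ge1Dx (ln x); rewrite lnK ?posrE //; lra.
Qed.

Lemma dens_int (p : T -> R) : is_density mu p -> mu.-integrable setT (EFin \o p).
Proof.
case=> p0 mp ip; apply/integrableP; split; first exact/measurable_EFinP.
under eq_integral do rewrite /= ger0_norm //.
by rewrite ip ltry.
Qed.

Lemma intR_B (f g : T -> R) : mu.-integrable setT (EFin \o f) ->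
  mu.-integrable setT (EFin \o g) -> mu.-integrable setT (EFin \o (fun y => f y - g y)).
Proof.
move=> hf hg; apply: (eq_integrable measurableT _ _ _ (integrableB measurableT hf hg)) => // y _ /=; by rewrite ?EFinB ?EFinD ?EFinM.
Qed.

Lemma intR_D (f g : T -> R) : mu.-integrable setT (EFin \o f) ->
  mu.-integrable setT (EFin \o g) -> mu.-integrable setT (EFin \o (fun y => f y + g y)).
Proof.
move=> hf hg; apply: (eq_integrable measurableT _ _ _ (integrableD measurableT hf hg)) => // y _ /=; by rewrite ?EFinB ?EFinD ?EFinM.
Qed.

Lemma intR_Z (k : R) (f : T -> R) : mu.-integrable setT (EFin \o f) ->
  mu.-integrable setT (EFin \o (fun y => k * f y)).
Proof.
move=> hf; apply: (eq_integrable measurableT _ _ _ (integrableZl measurableT k hf)) => // y _ /=; by rewrite ?EFinB ?EFinD ?EFinM.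
Qed.

Lemma intR_abs (f : T -> R) : mu.-integrable setT (EFin \o f) ->
  mu.-integrable setT (EFin \o (fun y => `|f y|)).
Proof.
move=> hf; exact: (eq_integrable measurableT _ _ _ (integrable_abse hf)).
Qed.

Lemma meas_inv (q : T -> R) : (forall y, 0 <= q y) -> measurable_fun setT q ->
  measurable_fun setT (fun y => (q y)^-1).
Proof.
move=> q0 mq.
rewrite (_ : (fun y => _) = (fun y => q y `^ (-1))); last first.
  by apply: funext => y; rewrite powR_inv1.
exact: measurableT_comp (measurable_powR _) mq.
Qed.


Lemma kl_core (p q c g : T -> R) (B : R) :
  is_density mu p -> is_density mu q -> supp p `<=` supp q ->
  measurable_fun setT c -> (forall y, 0 <= c y) -> (forall y, c y <= B) ->
  mu.-integrable setT (EFin \o g) ->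
  (forall y, p y * ln (p y / q y) <= g y - p y * c y) ->
  exists k e, [/\ KL mu p q = k%:E, expect mu p c = e%:E, 0 <= k, 0 <= e &
     ((k + e)%:E <= \int[mu]_y (g y)%:E)%E].
Proof.
move=> dp dq spq mc c0 cB ig hg.
have ip := dens_int dp; have iq := dens_int dq.
case: dp => p0 mp p1; case: dq => q0 mq q1.
have mpc : measurable_fun setT (fun y => p y * c y) by exact: measurable_funM.
have B0 : 0 <= B by apply: le_trans (c0 point) (cB point).
have ipc : mu.-integrable setT (EFin \o (fun y => p y * c y)).
  apply: (le_integrable measurableT _ _ (intR_Z B ip)).
    exact/measurable_EFinP.
  move=> y _ /=; rewrite lee_fin !ger0_norm ?mulr_ge0 //.
  by rewrite mulrC ler_wpM2r.
have mk1 : measurable_fun setT (fun y => p y * ln (p y / q y)).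
  apply: measurable_funM => //.
  apply: (measurableT_comp (@measurable_ln R)).
  by apply: measurable_funM => //; exact: meas_inv.
have lowb y : p y - q y <= p y * ln (p y / q y).
  have := p0 y; rewrite le0r => /orP[/eqP ->|py]; first by rewrite mul0r sub0r oppr_le0.
  have qy : 0 < q y by exact: (spq y py).
  have h := @ln_le_sub1 (q y / p y) (divr_gt0 qy py).
  have e : ln (p y / q y) = - ln (q y / p y).
    by rewrite -lnV ?posrE ?divr_gt0 // invf_div.
  have pq : p y * (q y / p y) = q y by rewrite mulrC divfK // gt_eqF.
  rewrite e; nra.
have ik1 : mu.-integrable setT (EFin \o (fun y => p y * ln (p y / q y))).
  apply: (le_integrable measurableT _ _
    (intR_D (intR_abs (intR_B ig ipc)) (intR_abs (intR_B ip iq)))).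
    exact/measurable_EFinP.
  move=> y _ /=; rewrite lee_fin [X in _ <= X]ger0_norm; last first.
    by apply: addr_ge0.
  have h1 := hg y; have h2 := lowb y.
  have h3 := ler_norm (g y - p y * c y); have h4 := ler_norm (q y - p y).
  rewrite (distrC (q y)) in h4.
  have h5 := normr_ge0 (p y - q y); have h6 := normr_ge0 (g y - p y * c y).
  case: (lerP 0 (p y * ln (p y / q y))) => h.
    rewrite [X in X <= _]ger0_norm //; lra.
  rewrite [X in X <= _]ltr0_norm //; lra.
have ipq : mu.-integrable setT (EFin \o (fun y => p y - q y)) by exact: intR_B.
have igpc : mu.-integrable setT (EFin \o (fun y => g y - p y * c y)) by exact: intR_B.
have KLfin := integrable_fin_num measurableT ik1.
have Efin := integrable_fin_num measurableT ipc.
have Efin' := Efin; have KLfin' := KLfin.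
move: KLfin' Efin'; rewrite /KL /expect.
case ek: (\int[mu]_y (p y * ln (p y / q y))%:E)%E => [k||] // _.
case ee: (\int[mu]_y (p y * c y)%:E)%E => [e||] // _.
exists k, e; split => //.
- rewrite -lee_fin -ek.
  have : (\int[mu]_y (p y - q y)%:E <= \int[mu]_y (p y * ln (p y / q y))%:E)%E.
    apply: le_integral => // y _; rewrite lee_fin; exact: lowb.
  under eq_integral do rewrite EFinB.
  by rewrite integralB_EFin // p1 q1 subee.
- rewrite -lee_fin -ee; apply: integral_ge0 => y _; rewrite lee_fin.
  exact: mulr_ge0.
- have : (\int[mu]_y (p y * ln (p y / q y))%:E <= \int[mu]_y (g y - p y * c y)%:E)%E.
    apply: le_integral => // y _; rewrite lee_fin; exact: hg.
  under [X in (_ <= X)%E -> _]eq_integral do rewrite EFinB.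
  rewrite integralB_EFin // ek ee EFinD.
  have gfin := integrable_fin_num measurableT ig.
  move: gfin; case: (\int[mu]_y (g y)%:E)%E => [G|//|//] _.
  rewrite -EFinB !lee_fin; lra.
Qed.

Lemma lnr (p q c : T -> R) y : supp p `<=` supp q -> 0 < p y ->
  ln (Defs.ratio p q c y) = ln (p y / q y) + c y.
Proof.
move=> spq py; have qy : 0 < q y := spq y py.
rewrite /Defs.ratio mulrAC [LHS]lnM ?posrE ?expR_gt0 ?divr_gt0 // expRK.
by [].
Qed.

Lemma ct_bound (p q c : T -> R) (B ct eta : R) :
  is_density mu p -> is_density mu q -> supp p `<=` supp q ->
  measurable_fun setT c -> (forall y, 0 <= c y) -> (forall y, c y <= B) ->
  0 < eta -> is_min_Vtilde mu p q c eta ct ->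
  exists k e, [/\ KL mu p q = k%:E, expect mu p c = e%:E, 0 <= k, 0 <= e & k + e <= ct].
Proof.
move=> dp dq spq mc c0 cB eta0 [[a a0 Va] _].
have ip := dens_int dp.
have [p0 mp p1] := dp; have [q0 mq q1] := dq.
rewrite /Vtilde in Va; case: eqP Va => [_|/eqP an0] Va.
  have hpt : forall y, p y * ln (p y / q y) <= ct * p y - p y * c y.
    move=> y; have := p0 y; rewrite le0r => /orP[/eqP ->|py].
      by rewrite !(mul0r, mulr0) subrr.
    have : ((ln (Defs.ratio p q c y))%:E <= ct%:E)%E.
      by rewrite -Va; apply: ereal_sup_ubound; exists y.
    rewrite lee_fin lnr // => h; nra.
  have [k [e [ek ee k0 e0 H]]] := kl_core B dp dq spq mc c0 cB (intR_Z ct ip) hpt.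
  exists k, e; split => //.
  move: H; rewrite /=.
  under eq_integral do rewrite EFinM.
  by rewrite integralZl // p1 mule1 lee_fin.
have apos : 0 < a by rewrite lt_neqAle eq_sym an0 a0.
set Z := expect mu p _ in Va.
have Z0 : (0 <= Z)%E.
  by apply: integral_ge0 => y _; rewrite lee_fin mulr_ge0 // powR_ge0.
move: Z0 Va; case eZ: Z => [z| |] // Z0 Va; last first.
  by move: Va; rewrite /= gt0_muley ?lte_fin.
move: Va; rewrite /lne; case: ifPn => [_|]; first by rewrite gt0_muleNy ?lte_fin.
rewrite -ltNge => z0 /= Va.
have ctE : ct = a * ln z + a * eta by case: Va => ->.
have mr : measurable_fun setT (Defs.ratio p q c).
  apply: measurable_funM; last exact: meas_inv.
  apply: measurable_funM => //; exact: measurableT_comp (@measurable_expR R) mc.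
have iZ : mu.-integrable setT (EFin \o (fun y => p y * Defs.ratio p q c y `^ a^-1)).
  apply/integrableP; split.
    apply/measurable_EFinP; apply: measurable_funM => //.
    exact: measurableT_comp (measurable_powR _) mr.
  under eq_integral do rewrite /= ger0_norm ?mulr_ge0 ?powR_ge0 //.
  by move: eZ; rewrite /Z /expect => ->; rewrite ltry.
have hpt : forall y, p y * ln (p y / q y) <=
     (a * (ln z - 1) * p y + a / z * (p y * Defs.ratio p q c y `^ a^-1)) - p y * c y.
  move=> y; have := p0 y; rewrite le0r => /orP[/eqP ->|py].
    by rewrite !(mul0r, mulr0, addr0, subr0).
  have qy : 0 < q y := spq y py.
  have r0 : 0 < Defs.ratio p q c y by rewrite /Defs.ratio divr_gt0 // mulr_gt0 // expR_gt0.
  have w0 : 0 < Defs.ratio p q c y `^ a^-1 / z by rewrite divr_gt0 // powR_gt0.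
  have h1 := @ln_le_sub1 _ w0.
  rewrite ln_div ?posrE ?powR_gt0 // ln_powR lnr // in h1.
  have h2 := ler_wpM2l (ltW apos) h1.
  rewrite mulrBr mulrA divff ?gt_eqF // mul1r in h2.
  have h3 := ler_wpM2l (ltW py) h2.
  nra.

have [k [e [ek ee k0 e0 H]]] := kl_core B dp dq spq mc c0 cB
  (intR_D (intR_Z (a * (ln z - 1)) ip) (intR_Z (a / z) iZ)) hpt.
exists k, e; split => //.
move: H; rewrite /=.
under eq_integral do rewrite EFinD.
rewrite integralD //; last 2 first.
  exact: (intR_Z (a * (ln z - 1)) ip).
  exact: (intR_Z (a / z) iZ).
under eq_integral do rewrite EFinM.
rewrite integralZl // p1 mule1.
under eq_integral do rewrite EFinM.
rewrite integralZl //.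
move: eZ; rewrite /Z /expect => ->.
rewrite -EFinM -EFinD lee_fin ctE => h.
have : a / z * z = a by rewrite divfK // gt_eqF.
nra.
Qed.

Lemma pos_int (qu : T -> R) (h : T -> \bar R) : is_density mu qu ->
  measurable_fun setT h -> (forall u, 0 <= h u)%E ->
  (forall u, (0 < qu u)%R -> (0 < h u)%E) -> (0 < \int[mu]_u h u)%E.
Proof.
move=> [q0 mq q1] mh h0 hpos.
rewrite lt_neqAle integral_ge0 ?andbT; last by move=> u _; exact: h0.
apply/negP => /eqP /esym H0.
have H1 : (\int[mu]_u `|h u| = 0)%E.
  by under eq_integral do rewrite gee0_abs //; exact: H0.
have hae := (ae_eq_integral_abs mu measurableT mh).1 H1.
have hq : ae_eq mu setT (EFin \o qu) (cst 0%E).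
  apply: filterS hae => u H _; have := H I => /= hu0.
  have := q0 u; rewrite le0r => /orP[/eqP -> //|qp].
  by have := hpos u qp; rewrite hu0 ltxx.
have mEq : measurable_fun setT (EFin \o qu) by exact/measurable_EFinP.
have E := ae_eq_integral (cst 0%E) (EFin \o qu) measurableT mEq (measurable_cst _) hq.
move: E; rewrite integral0 /=.
move=> E0; move: q1; rewrite E0.
by move=> [] /eqP; rewrite eq_sym oner_eq0.
Qed.

End Helpers.

Theorem lemma5 (R : realType)
  (dX : measure_display) (X : measurableType dX) (muX : {measure set X -> \bar R})
  (dU : measure_display) (U : measurableType dU) (muU : {measure set U -> \bar R})
  (qu : X -> U -> R)              (* q(u_k | x_{k-1}) *)
  (pbar : X -> U -> X -> R)       (* pbar(x_k | x_{k-1}, u_k) *)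
  (qx : X -> U -> X -> R)         (* q(x_k | x_{k-1}, u_k) *)
  (eta : X -> U -> R)             (* eta_k(x_{k-1}, u_k) *)
  (cbar : X -> R) (cu : U -> R)   (* state cost, action cost c^(u)_k *)
  (ctilde : X -> U -> R) :
  (forall x, is_density muU (qu x)) ->
  (forall x u, is_density muX (pbar x u)) ->
  (forall x u, is_density muX (qx x u)) ->
  (exists B : R, forall x u y, qx x u y <= B) ->
  (forall x u, supp (pbar x u) `<=` supp (qx x u)) ->
  (forall x u, 0 < eta x u) ->
  (exists B : R, forall x u, eta x u <= B) ->
  (forall y, 0 <= cbar y) -> (exists B : R, forall y, cbar y <= B) ->
  measurable_fun setT cbar ->
  (forall u, 0 <= cu u) -> (exists B : R, forall u, B <= cu u) ->
  (* ctilde = min_{alpha >= 0} Vtilde_alpha *)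
  (forall x u, is_min_Vtilde muX (pbar x u) (qx x u) cbar (eta x u) (ctilde x u)) ->
  (* measurability of the integrands in u_k *)
  (forall x, measurable_fun [set: U] (fun u : U => ((qu x u)%:E *
      expeR (- KL muX (pbar x u) (qx x u) - expect muX (pbar x u) cbar - (cu u)%:E))%E)) ->
  (forall x, measurable_fun [set: U] (fun u : U =>
      ((qu x u)%:E * expeR (- (eta x u)%:E - (ctilde x u)%:E - (cu u)%:E))%E)) ->
  forall xprev : X,
  (- lne (\int[muU]_u ((qu xprev u)%:E *
      expeR (- KL muX (pbar xprev u) (qx xprev u)
             - expect muX (pbar xprev u) cbar - (cu u)%:E)))
   < - lne (\int[muU]_u ((qu xprev u)%:E *
      expeR (- (eta xprev u)%:E - (ctilde xprev u)%:E - (cu u)%:E))))%E.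

Proof.
move=> dq dp dqx _ spq eta0 _ c0 [Bc hBc] mc cu0 _ hmin mF mG x.
have key u : exists f g : R,
   [/\ ((qu x u)%:E * expeR (- KL muX (pbar x u) (qx x u)
             - expect muX (pbar x u) cbar - (cu u)%:E))%E = f%:E,
       ((qu x u)%:E * expeR (- (eta x u)%:E - (ctilde x u)%:E - (cu u)%:E))%E = g%:E,
       0 <= g <= f, f <= qu x u &
       (0 < qu x u -> 0 < g < f)].
  have [k [e [ek ee k0 e0 H]]] := ct_bound Bc (dp x u) (dqx x u) (spq x u) mc c0 hBc
    (eta0 x u) (hmin x u).
  rewrite ek ee.
  exists (qu x u * expR (- k - e - cu u)), (qu x u * expR (- eta x u - ctilde x u - cu u)).
  have q0 : 0 <= qu x u by case: (dq x) => + _ _; apply.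
  have lt1 : expR (- eta x u - ctilde x u - cu u) < expR (- k - e - cu u).
    rewrite ltr_expR; have := eta0 x u; lra.
  have le1 : expR (- k - e - cu u) <= 1.
    rewrite -expR0 ler_expR; have := cu0 u; lra.
  split => //.
  - by rewrite mulr_ge0 ?expR_ge0 //= ler_wpM2l // ltW.
  - by rewrite -[leRHS]mulr1 ler_wpM2l.
  - move=> qp; rewrite mulr_gt0 ?expR_gt0 //=.
    by rewrite ltr_pM2l.
set F := fun u => ((qu x u)%:E * expeR (- KL muX (pbar x u) (qx x u)
             - expect muX (pbar x u) cbar - (cu u)%:E))%E.
set G := fun u => ((qu x u)%:E * expeR (- (eta x u)%:E - (ctilde x u)%:E - (cu u)%:E))%E.
have iq := dens_int (dq x).
have iF : muU.-integrable setT F.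
  apply: (le_integrable measurableT (mF x) _ iq) => u _.
  have [fv [gv [-> _ /andP[g0 gf] fq _]]] := key u.
  have q0 : 0 <= qu x u by case: (dq x) => + _ _; apply.
  by rewrite /= lee_fin !ger0_norm // (le_trans g0 gf).
have iG : muU.-integrable setT G.
  apply: (le_integrable measurableT (mG x) _ iq) => u _.
  have [fv [gv [_ -> /andP[g0 gf] fq _]]] := key u.
  have q0 : 0 <= qu x u by case: (dq x) => + _ _; apply.
  by rewrite /= lee_fin !ger0_norm // (le_trans gf fq).
have pG : (0 < \int[muU]_u G u)%E.
  apply: (pos_int (dq x) (mG x)) => u.
    by have [fv [gv [_ -> /andP[g0 _] _ _]]] := key u; rewrite lee_fin.
  by move=> qp; have [fv [gv [_ -> _ _ /(_ qp)/andP[g0 _]]]] := key u; rewrite lte_fin.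
have pFG : (0 < \int[muU]_u (F \- G)%E u)%E.
  apply: (pos_int (dq x)) => [|u|u].
  - exact: emeasurable_funB (mF x) (mG x).
  - rewrite /F /G; cbv beta; have [fv [gv [-> -> /andP[_ gf] _ _]]] := key u; by rewrite /= -EFinB lee_fin subr_ge0.
  - move=> qp; rewrite /F /G; cbv beta; have [fv [gv [-> -> _ _ /(_ qp)/andP[_ gf]]]] := key u.
    by rewrite /= -EFinB lte_fin subr_gt0.
rewrite integralB // in pFG.
have := integrable_fin_num measurableT iF; have := integrable_fin_num measurableT iG.
rewrite -/F -/G.
move: pG pFG.
case: (\int[muU]_u G u)%E => [bG| |] // ; case: (\int[muU]_u F u)%E => [bF| |] // .
rewrite !lte_fin => bG0 bFG _ _.
rewrite !lne_EFin //; last by lra.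
rewrite lteN2 lte_fin ltr_ln ?posrE //; lra.
Qed.
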